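(* Let $G=(V,E)$ be a finite, connected, undirected graph with $n\ge2$ vertices. For the Moran process $(X_i)_{i\ge0}$ on $G$ with $r=1$, started from $X_0=\{x\}$ with $x$ chosen uniformly at random from $V$, the expected absorption time is at most $n^4\big(\phi(G)^2-\phi'_0\big)$, where $\phi'_0=\frac1n\sum_{x\in V}(\deg x)^{-2}$.
   Context: The Moran process on $G$ with mutant fitness $r>0$ is the Markov chain $(X_i)_{i\ge0}$ whose state $X_i\subseteq V$ is the set of vertices occupied by mutants; every other vertex is occupied by a non-mutant of fitness $1$. Write $W(S)=r|S|+|V\setminus S|$ for the total fitness. Given $X_i=S$, one step is: choose a vertex $x$ with probability $r/W(S)$ if $x\in S$ and $1/W(S)$ if $x\notin S$; then choose a neighbour $y$ of $x$ uniformly at random; set $X_{i+1}=S\cup\{y\}$ if $x\in S$ and $X_{i+1}=S\setminus\{y\}$ if $x\notin S$. The absorption time is $\min\{i: X_i=\emptyset\text{ or }X_i=V\}$. For $X\subseteq V$, $\phi(X)=\sum_{x\in X}\frac{1}{\deg x}$, and $\phi(G)=\phi(V)$. *)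

(* Defs.v *)
(* Graph: symmetric irreflexive relation e on a finType T. *)
From HB Require Import structures.
From mathcomp Require Import all_boot all_order all_algebra.
Set Implicit Arguments. Unset Strict Implicit. Unset Printing Implicit Defensive.
Import Order.TTheory GRing.Theory Num.Theory.
Local Open Scope ring_scope.

Section Moran.
Variables (R : realFieldType) (T : finType) (e : rel T).

Definition deg (x : T) : nat := #|[set y | e x y]|.

Definition phi (X : {set T}) : R := \sum_(x in X) (deg x)%:R^-1.

Definition phi0' : R := #|T|%:R^-1 * \sum_(x : T) ((deg x)%:R ^+ 2)^-1.

Definition fitness (r : R) (S : {set T}) : R := r * #|S|%:R + #|~: S|%:R.

(* the state after x reproduces onto neighbour y *)
Definition moran_next (S : {set T}) (x y : T) : {set T} :=
  if x \in S then y |: S else S :\ y.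

Definition moran_trans (r : R) (S S' : {set T}) : R :=
  \sum_(x : T) \sum_(y | e x y)
     ((if x \in S then r else 1) / fitness r S) * (deg x)%:R^-1
       * (moran_next S x y == S')%:R.

Definition absorbing (S : {set T}) : bool := (S == set0) || (S == setT).

Definition init_dist (S : {set T}) : R :=
  \sum_(x : T) #|T|%:R^-1 * (S == [set x])%:R.

(* surv_dist r t S = P(X_t = S and X_0,...,X_t all non-absorbing) *)
Fixpoint surv_dist (r : R) (t : nat) (S' : {set T}) : R :=
  if absorbing S' then 0 else
  match t with
  | 0 => init_dist S'
  | t'.+1 => \sum_(S : {set T}) surv_dist r t' S * moran_trans r S S'
  end.

Definition prob_not_absorbed (r : R) (t : nat) : R :=
  \sum_(S : {set T}) surv_dist r t S.

(* E[tau] = sum_{t>=0} P(tau > t); E[tau] <= B  iff all partial sums <= B *)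
Definition expected_absorption_le (r : R) (B : R) : Prop :=
  forall N : nat, \sum_(t < N) prob_not_absorbed r t <= B.

End Moran.

(* Main.v *)
Require Import Defs.
From HB Require Import structures.
From mathcomp Require Import all_boot all_order all_algebra.
From mathcomp Require Import ring lra.
Import Order.TTheory GRing.Theory Num.Theory.
Local Open Scope ring_scope.

Section Proofs.
Variables (R : realFieldType) (T : finType) (e : rel T).
Hypotheses (e_sym : symmetric e) (e_conn : forall x y : T, connect e x y).
Hypothesis n_pos : (0 < #|T|)%N.

Local Notation n := (#|T|%:R : R).
Local Notation w z := ((deg e z)%:R^-1 : R).

Lemma phiE X : phi R e X = \sum_z (z \in X)%:R * w z.
Proof.
rewrite /phi big_mkcond; apply eq_bigr => z _.
by case: (z \in X); rewrite ?mul1r ?mul0r.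
Qed.

Definition Phi := phi R e setT.
Definition h S := phi R e S * (Phi - phi R e S).

Lemma PhiE : Phi = \sum_z w z.
Proof. by rewrite /Phi phiE; apply eq_bigr => z _; rewrite inE mul1r. Qed.

Lemma h_ge0 S : 0 <= h S.
Proof.
rewrite /h.
have -> : Phi - phi R e S = \sum_z (1 - (z \in S)%:R) * w z.
  by rewrite PhiE phiE -sumrB; apply eq_bigr => z _; rewrite mulrBl mul1r.
apply mulr_ge0; rewrite ?phiE; apply sumr_ge0 => z _; apply mulr_ge0;
  rewrite ?invr_ge0 ?ler0n //; case: (z \in S) => /=; rewrite ?subrr ?subr0 //.
Qed.

Lemma h_abs S : absorbing S -> h S = 0.
Proof.
case/orP => /eqP ->; rewrite /h.
  by rewrite /phi big_set0 mul0r.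
by rewrite -/Phi subrr mulr0.
Qed.

Lemma phi_next S x y : phi R e (moran_next S x y) =
  phi R e S + ((x \in S)%:R - (y \in S)%:R) * w y.
Proof.
rewrite !phiE.
have -> : \sum_z ((z \in moran_next S x y)%:R * w z) =
   \sum_z ((z \in S)%:R * w z + (z == y)%:R * (((x \in S)%:R - (y \in S)%:R) * w y)).
  apply eq_bigr => z _; rewrite /moran_next; case: (eqVneq z y) => [->|nzy].
    by case: (x \in S); rewrite ?in_setU1 ?in_setD1 eqxx /=;
       case: (y \in S); rewrite /=; ring.
  by case: (x \in S); rewrite ?in_setU1 ?in_setD1 (negbTE nzy) /=; ring.
rewrite big_split /=; congr (_ + _).
rewrite (bigD1 y) //= eqxx mul1r big1 ?addr0 // => z /negbTE ->.
by rewrite mul0r.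
Qed.

Lemma sum_trans (S : {set T}) (g : {set T} -> R) :
  \sum_S' moran_trans e 1 S S' * g S' =
  \sum_x \sum_(y | e x y) (n^-1 * w x) * g (moran_next S x y).
Proof.
rewrite /moran_trans.
have Hf : fitness 1 S = n by rewrite /fitness mul1r -natrD cardsC.
under eq_bigr => S' _ do rewrite big_distrl /=.
rewrite exchange_big; apply eq_bigr => x _.
under eq_bigr => S' _ do rewrite big_distrl /=.
rewrite exchange_big; apply eq_bigr => y _ /=.
rewrite (bigD1 (moran_next S x y)) //= eqxx mulr1 big1 ?addr0.
  by rewrite Hf if_same div1r.
move=> S' /negbTE; rewrite eq_sym => ->; by rewrite mulr0 mul0r.
Qed.


Lemma n_gt0 : 0 < n.
Proof. by rewrite ltr0n. Qed.

Lemma deg_le x : (deg e x <= #|T|)%N.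
Proof. exact: max_card. Qed.

Lemma w_ge x y : e x y -> n^-1 <= w x.
Proof.
move=> exy.
have d0 : (0 < deg e x)%N by apply/card_gt0P; exists y; rewrite inE.
rewrite lef_pV2 ?posrE ?ltr0n // ler_nat; exact: deg_le.
Qed.

Lemma cross_edge S : ~~ absorbing S ->
  exists x y, [/\ e x y, x \in S & y \notin S].
Proof.
rewrite /absorbing negb_or => /andP [S0 ST].
have [x0 x0S] := set0Pn _ S0.
have [_ [y0 _ y0S]] : S \subset setT /\ exists2 y, y \in setT & y \notin S.
  by apply/properP; rewrite properT.
have [/existsP [x1 /existsP [y1 /and3P [exy x1S y1S]]] | Hno] :=
  boolP [exists x, exists y, [&& e x y, x \in S & y \notin S]].
  by exists x1, y1.
exfalso.
have cl : closed e (mem S).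
  apply: intro_closed; first exact: sym_connect_sym.
  move=> x y exy xS; apply/negPn/negP => yS; move/negP: Hno; apply.
  by apply/existsP; exists x; apply/existsP; exists y; rewrite exy xS yS.
have := closed_connect cl (e_conn x0 y0).
by rewrite x0S (negbTE y0S).
Qed.

Lemma key S : ~~ absorbing S ->
  \sum_x \sum_(y | e x y) (n^-1 * w x) * h (moran_next S x y) <= h S - n^-1 ^+ 4.
Proof.
move=> nabs.
set a := phi R e S.
pose chi z : R := (z \in S)%:R.
pose d x y := (chi x - chi y) * w y.
pose C := \sum_x \sum_(y | e x y) (n^-1 * w x).
pose D := \sum_x \sum_(y | e x y) (n^-1 * w x) * d x y.
pose E := \sum_x \sum_(y | e x y) (n^-1 * w x) * d x y ^+ 2.
have -> : \sum_x \sum_(y | e x y) (n^-1 * w x) * h (moran_next S x y)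
   = h S * C + (Phi - 2 * a) * D - E.
  rewrite /C /D /E mulr_sumr [(Phi - 2 * a) * _]mulr_sumr -big_split -sumrB.
  apply eq_bigr => x _.
  rewrite mulr_sumr mulr_sumr -big_split -sumrB; apply eq_bigr => y _.
  rewrite /h phi_next /d /chi -/a; rewrite /=; ring.
have D0 : D = 0.
  have : D = - D.
    rewrite /D; under eq_bigr => x _ do rewrite big_mkcond.
    rewrite [LHS]exchange_big -sumrN; apply eq_bigr => y _; rewrite -sumrN.
    apply eq_bigr => x _; rewrite /= (e_sym x y); case: (e y x); last by rewrite oppr0.
    rewrite /d; ring.
  lra.
have C1 : C <= 1.
  apply: (@le_trans _ _ (\sum_(x : T) n^-1)).
    apply ler_sum => x _.
    have -> : \sum_(y | e x y) n^-1 * w x = \sum_(y in [set y | e x y]) n^-1 * w x.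
      by apply eq_bigl => y; rewrite inE.
    rewrite sumr_const -[_ *+ #|[set y | e x y]|]mulr_natr -/(deg e x) -mulrA.
    case: (eqVneq (deg e x) 0%N) => [->|nz]; first by rewrite !mulr0n invr0 !mulr0 invr_ge0 ler0n.
    by rewrite mulVf ?mulr1 // pnatr_eq0.
  rewrite sumr_const; change (n^-1 *+ #|T| <= 1); rewrite -[_ *+ #|T|]mulr_natr mulVf //; exact: lt0r_neq0 n_gt0.
have [x0 [y0 [exy x0S y0S]]] := cross_edge _ nabs.
have E1 : n^-1 ^+ 4 <= E.
  have hterm : forall x y, 0 <= (n^-1 * w x) * d x y ^+ 2.
    move=> x y; rewrite mulr_ge0 ?sqr_ge0 // mulr_ge0 // invr_ge0 ler0n //.
  rewrite /E (bigD1 x0) //= -[X in X <= _]addr0 lerD ?sumr_ge0 //; last first.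
    by move=> x _; apply sumr_ge0 => y _; apply hterm.
  rewrite (bigD1 y0) //= -[X in X <= _]addr0 lerD ?sumr_ge0 //.
  rewrite /d /chi x0S (negbTE y0S) /= subr0 mul1r.
  have h1 := w_ge _ _ exy.
  have h2 : n^-1 <= w y0 by apply: (w_ge y0 x0); rewrite e_sym.
  have h0 : 0 <= n^-1 by rewrite invr_ge0 ler0n.
  move: h0 h1 h2; move: (n^-1) (w x0) (w y0) => u p q h0 h1 h2.
  have hp : 0 <= p by apply: le_trans h1.
  have hq : 0 <= q by apply: le_trans h2.
  rewrite expr2 -[u ^+ 4]/(u * (u * (u * u))) -[u * _ * _]mulrA.
  apply: ler_pM => //; first by rewrite !mulr_ge0.
  apply: ler_pM => //; first by rewrite !mulr_ge0.
  by apply: ler_pM.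
have hS := h_ge0 S.
rewrite D0 mulr0 addr0.
nra.
Qed.


Lemma trans_ge0 S S' : 0 <= moran_trans e (1 : R) S S'.
Proof.
have Hf : fitness 1 S = n by rewrite /fitness mul1r -natrD cardsC.
apply sumr_ge0 => x _; apply sumr_ge0 => y _.
by rewrite Hf if_same !mulr_ge0 ?invr_ge0 ?ler0n.
Qed.

Lemma surv_abs t S : absorbing S -> surv_dist e (1 : R) t S = 0.
Proof. by case: t => [|t] /= ->. Qed.

Lemma surv_ge0 t S : 0 <= surv_dist e (1 : R) t S.
Proof.
elim: t S => [|t IH] S /=; case: (absorbing S) => //.
  by apply sumr_ge0 => x _; rewrite mulr_ge0 ?invr_ge0 ?ler0n.
by apply sumr_ge0 => S' _; rewrite mulr_ge0 ?trans_ge0.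
Qed.

Definition H t := \sum_S surv_dist e (1 : R) t S * h S.

Lemma H_ge0 t : 0 <= H t.
Proof. by apply sumr_ge0 => S _; rewrite mulr_ge0 ?surv_ge0 ?h_ge0. Qed.

Lemma H_step t : H t.+1 <= H t - n^-1 ^+ 4 * prob_not_absorbed e (1 : R) t.
Proof.
rewrite /H.
have -> : \sum_S' surv_dist e (1 : R) t.+1 S' * h S' =
   \sum_S' (\sum_S surv_dist e (1 : R) t S * moran_trans e 1 S S') * h S'.
  apply eq_bigr => S' _ /=.
  case: (boolP (absorbing S')) => [ab|nab]; first by rewrite (h_abs _ ab) !mulr0.
  by [].
under eq_bigr => S' _ do rewrite big_distrl.
rewrite exchange_big /=.
under eq_bigr => S _ do (under eq_bigr => S' _ do rewrite -mulrA; rewrite -mulr_sumr sum_trans).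
rewrite /prob_not_absorbed mulr_sumr -sumrB; apply ler_sum => S _.
case: (boolP (absorbing S)) => [ab|nab].
  by rewrite surv_abs // !mul0r mulr0 subr0.
apply: le_trans (ler_wpM2l (surv_ge0 t S) (key _ nab)) _.
by rewrite mulrBr [_ * surv_dist _ _ _ _]mulrC.
Qed.

Lemma tele N : \sum_(t < N) n^-1 ^+ 4 * prob_not_absorbed e (1 : R) t <= H 0 - H N.
Proof.
elim: N => [|N IH]; first by rewrite big_ord0 subrr.
rewrite big_ord_recr /=.
have := H_step N; lra.
Qed.

Lemma H0E : H 0 = n^-1 * \sum_x (w x * (Phi - w x)).
Proof.
rewrite /H.
have -> : \sum_S surv_dist e (1 : R) 0 S * h S = \sum_S init_dist R S * h S.
  apply eq_bigr => S _ /=.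
  case: (boolP (absorbing S)) => [ab|nab]; first by rewrite (h_abs _ ab) !mulr0.
  by [].
rewrite /init_dist.
under eq_bigr => S _ do rewrite big_distrl.
rewrite exchange_big mulr_sumr; apply eq_bigr => x _ /=.
rewrite (bigD1 [set x]) //= eqxx big1 ?addr0.
  by rewrite /h /phi big_set1 mulr1.
by move=> S /negbTE ->; rewrite mulr0 mul0r.
Qed.

Lemma main N :
  \sum_(t < N) prob_not_absorbed e (1 : R) t <= n ^+ 4 * (Phi ^+ 2 - phi0' R e).
Proof.
have hn := n_gt0.
have hm : 0 < n^-1 by rewrite invr_gt0.
have hm1 : n^-1 <= 1 by rewrite invf_le1 // ler1n.
have h4 : n ^+ 4 * n^-1 ^+ 4 = 1 by rewrite -exprMn mulfV ?expr1n // lt0r_neq0.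
have T1 := tele N.
have HN := H_ge0 N.
rewrite -mulr_sumr in T1.
set Sm := \sum_(t < N) _ in T1 *.
have T2 : Sm <= n ^+ 4 * H 0.
  have n4 : 0 <= n ^+ 4 by rewrite exprn_ge0 // ltW.
  have T1p : n^-1 ^+ 4 * Sm <= H 0 by lra.
  have := ler_wpM2l n4 T1p.
  by rewrite mulrA h4 mul1r.
apply: le_trans T2 _.
rewrite H0E /phi0'.
have -> : \sum_x (w x * (Phi - w x)) = Phi ^+ 2 - \sum_x ((deg e x)%:R ^+ 2)^-1.
  have -> : Phi ^+ 2 = \sum_x w x * Phi by rewrite -mulr_suml -PhiE expr2.
  rewrite -sumrB; apply eq_bigr => x _.
  by rewrite -exprVn expr2; ring.
set P := Phi; set Q := \sum_x _; set m := n^-1.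
have n4 : 0 <= n ^+ 4 by rewrite exprn_ge0 // ltW.
have hP : 0 <= n ^+ 4 * P ^+ 2 * (1 - m).
  by apply: mulr_ge0; [apply: mulr_ge0; [exact: n4 | exact: sqr_ge0] | rewrite subr_ge0].
rewrite -subr_ge0; set L := (X in 0 <= X).
have -> : L = n ^+ 4 * P ^+ 2 * (1 - m) by rewrite /L; ring.
exact: hP.
Qed.

End Proofs.

Theorem theorem9 (R : realFieldType) (T : finType) (e : rel T)
    (e_sym : symmetric e) (e_irr : irreflexive e)
    (e_conn : forall x y : T, connect e x y)
    (n_ge2 : (2 <= #|T|)%N) :
  expected_absorption_le e 1
    (#|T|%:R ^+ 4 * (phi R e setT ^+ 2 - phi0' R e)).
Proof.
move=> N.
have n_pos : (0 < #|T|)%N by apply: leq_trans n_ge2.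
exact: (@main R T e e_sym e_conn n_pos N).
Qed.
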